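(* Let $M\in\mathrm{M}_n(\mathbb{K})$ be a cyclic matrix with minimal polynomial $f=f_1^{m_1}\cdots f_s^{m_s}$, where $f_1,\dots,f_s\in\mathbb{K}[x]$ are pairwise distinct monic irreducible polynomials and $m_i\ge1$. Then every nonzero $M$-cyclic code $\mathcal{C}\subseteq\mathbb{L}^n$ satisfies $M_1(\mathcal{C})=1$ if and only if $f_1,\dots,f_s$ are all irreducible in $\mathbb{L}[x]$.
   Context: Let $\mathbb{L}/\mathbb{K}$ be a field extension of finite degree $m\ge n$. Vectors are row vectors. For $c=(c_1,\dots,c_n)\in\mathbb{L}^n$, $\mathrm{wt}_R(c)=\dim_{\mathbb{K}}\mathrm{Span}_{\mathbb{K}}(c_1,\dots,c_n)$, and for a nonzero linear code $\mathcal{C}\subseteq\mathbb{L}^n$ (an $\mathbb{L}$-subspace), $M_1(\mathcal{C})=\min\{\mathrm{wt}_R(c):0\neq c\in\mathcal{C}\}$. A matrix $M\in\mathrm{M}_n(\mathbb{K})$ is cyclic if there is $v\in\mathbb{K}^n$ with $(v,vM^t,\dots,v(M^t)^{n-1})$ a basis of $\mathbb{K}^n$. An $M$-cyclic code is an $\mathbb{L}$-subspace $\mathcal{C}\subseteq\mathbb{L}^n$ with $cM^t\in\mathcal{C}$ for all $c\in\mathcal{C}$, where $M$ is cyclic. *)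

(* Defs.v *)
From HB Require Import structures.
From mathcomp Require Import all_boot all_order all_algebra all_field.
Set Implicit Arguments. Unset Strict Implicit. Unset Printing Implicit Defensive.
Import GRing.Theory.
Local Open Scope ring_scope.

Definition cyclic_mx (K : fieldType) (n : nat) (M : 'M[K]_n) : Prop :=
  exists v : 'rV[K]_n,
    (\matrix_(i < n) (v *m (M^T) ^+ i)) \in unitmx.

Definition rank_wt (K : fieldType) (L : fieldExtType K) (n : nat)
    (c : 'rV[L]_n) : nat :=
  \dim (<<[seq c ord0 j | j <- enum 'I_n]>>%VS : {vspace L}).

Definition mx_invariant_code (K : fieldType) (L : fieldExtType K) (n : nat)
    (M : 'M[K]_n) (C : {vspace 'rV[L]_n}) : Prop :=
  forall c, c \in C -> c *m map_mx (in_alg L) M^T \in C.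

Definition M1_eq (K : fieldType) (L : fieldExtType K) (n : nat)
    (C : {vspace 'rV[L]_n}) (d : nat) : Prop :=
  (exists2 c, (c \in C) && (c != 0) & rank_wt c = d) /\
  (forall c, c \in C -> c != 0 -> (d <= rank_wt c)%N).

(* Main.v *)
Require Import Defs.
From HB Require Import structures.
From mathcomp Require Import all_boot all_order all_algebra all_field.
From mathcomp Require Import ring zify.
Import GRing.Theory.
Local Open Scope ring_scope.

Lemma horner_mx_sum (R : comNzRingType) (N : nat) (A : 'M[R]_N.+1) (p : {poly R}) m :
  (size p <= m)%N -> horner_mx A p = \sum_(i < m) p`_i *: A ^+ i.
Proof.
move=> hp.
have hq : p = \poly_(i < m) p`_i.
  apply/polyP => i; rewrite coef_poly; case: ltnP => // h.
  by rewrite nth_default // (leq_trans hp h).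
rewrite {1}hq poly_def rmorph_sum; apply: eq_bigr => i _.
by rewrite -mul_polyC rmorphM /= horner_mx_C rmorphXn /= horner_mx_X -mulmxE mul_scalar_mx.
Qed.

Lemma trmxX (R : comNzRingType) (N : nat) (A : 'M[R]_N.+1) i : (A ^+ i)^T = (A^T) ^+ i.
Proof.
elim: i => [|i IH]; first by rewrite !expr0 trmx1.
by rewrite exprS exprSr -!mulmxE trmx_mul IH.
Qed.

Lemma horner_mx_tr (R : comNzRingType) (N : nat) (A : 'M[R]_N.+1) (p : {poly R}) :
  horner_mx A^T p = (horner_mx A p)^T.
Proof.
rewrite !(@horner_mx_sum _ _ _ _ _ (leqnn (size p))) linear_sum; apply: eq_bigr => i _.
by rewrite linearZ /= trmxX.
Qed.

Lemma vec_horner (R : comNzRingType) (N : nat) (A : 'M[R]_N.+1) (u : 'rV[R]_N.+1) (p : {poly R}) :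
  (size p <= N.+1)%N ->
  u *m horner_mx A p = (\row_(i < N.+1) p`_i) *m (\matrix_(i < N.+1) (u *m A ^+ i)).
Proof.
move=> hp; rewrite (@horner_mx_sum _ _ A _ _ hp) mulmx_sumr mulmx_sum_row.
by apply: eq_bigr => i _; rewrite -scalemxAr rowK mxE.
Qed.

Lemma cyc_inj (F : fieldType) (N : nat) (A : 'M[F]_N.+1) (u : 'rV[F]_N.+1) (p : {poly F}) :
  (\matrix_(i < N.+1) (u *m A ^+ i)) \in unitmx ->
  (size p <= N.+1)%N -> u *m horner_mx A p = 0 -> p = 0.
Proof.
move=> hU hp; rewrite (@vec_horner _ _ A u _ hp) => h0.
have : (\row_(i < N.+1) p`_i) = 0.
  by rewrite -[LHS](mulmxK hU) h0 mul0mx.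
move/rowP => hr; apply/polyP => i; rewrite coef0.
case: (ltnP i N.+1) => hi; first by have := hr (Ordinal hi); rewrite !mxE.
by rewrite nth_default // (leq_trans hp hi).
Qed.

Lemma cyc_surj (F : fieldType) (N : nat) (A : 'M[F]_N.+1) (u : 'rV[F]_N.+1) (y : 'rV[F]_N.+1) :
  (\matrix_(i < N.+1) (u *m A ^+ i)) \in unitmx ->
  exists p, y = u *m horner_mx A p.
Proof.
move=> hU; set Kr := \matrix_(i < N.+1) (u *m A ^+ i).
exists (\poly_(i < N.+1) (y *m invmx Kr) 0 (inord i)).
rewrite vec_horner ?size_poly //.
have -> : (\row_(i < N.+1) (\poly_(i0 < N.+1) (y *m invmx Kr) 0 (inord i0))`_i) = y *m invmx Kr.
  by apply/rowP => i; rewrite mxE coef_poly ltn_ord inord_val.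
by rewrite mulmxKV.
Qed.

Lemma rw_pos (K : fieldType) (L : fieldExtType K) (n : nat) (c : 'rV[L]_n) :
  c != 0 -> (0 < rank_wt c)%N.
Proof.
move=> hc; rewrite /rank_wt lt0n dimv_eq0.
have [j hj] : exists j, c ord0 j != 0.
  apply/existsP; apply: contraR hc => /existsPn h.
  by apply/eqP/rowP => j; rewrite mxE; have := h j; rewrite negbK => /eqP.
apply: contra hj => /eqP h0.
have : c ord0 j \in <<[seq c ord0 j0 | j0 <- enum 'I_n]>>%VS.
  by apply: memv_span; apply: map_f; rewrite mem_enum.
by rewrite h0 memv0.
Qed.

Lemma rw_K (K : fieldType) (L : fieldExtType K) (n : nat) (v : 'rV[K]_n) :
  v != 0 -> rank_wt (map_mx (in_alg L) v) = 1%N.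
Proof.
move=> hv; apply/eqP; rewrite eqn_leq rw_pos ?andbT; last by rewrite map_mx_eq0.
rewrite /rank_wt; apply: (@leq_trans (\dim <[1 : L]>%VS)); last by rewrite dim_vline oner_eq0.
apply: dimvS; apply/span_subvP => x /mapP [j _ ->].
by rewrite mxE in_algE -[_%:A]/(_ *: 1) memvZ // memv_line.
Qed.

Lemma rw_one (K : fieldType) (L : fieldExtType K) (n : nat) (c : 'rV[L]_n) :
  rank_wt c = 1%N -> exists2 lam : L, lam != 0 & exists v : 'rV[K]_n, c = lam *: map_mx (in_alg L) v.
Proof.
rewrite /rank_wt; set U := (<<_>>%VS) => hU.
have U0 : U != 0%VS by rewrite -dimv_eq0 hU.
set lam := vpick U.
have hl : lam != 0 by rewrite vpick0.
have eqU : U = <[lam]>%VS.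
  apply/eqP; rewrite eq_sym eqEdim dim_vline hl hU leqnn andbT.
  by rewrite -memvE memv_pick.
have hj : forall j, exists k : K, c ord0 j = k *: lam.
  move=> j; apply/vlineP; rewrite -eqU; apply: memv_span; apply: map_f; by rewrite mem_enum.
have [k hk] := fin_all_exists hj.
exists lam => //; exists (\row_j k j).
apply/rowP => j; rewrite !mxE hk in_algE mulr_algr. by [].
Qed.



Lemma map_mxX' (aR rR : comNzRingType) (f : {rmorphism aR -> rR}) (N : nat)
  (A : 'M[aR]_N.+1) i : map_mx f (A ^+ i) = (map_mx f A) ^+ i.
Proof.
elim: i => [|i IH]; first by rewrite !expr0 map_mx1.
by rewrite !exprS -!mulmxE map_mxM IH.
Qed.

Lemma phi_lem (K : fieldType) (L : fieldExtType K) (N : nat) (A : 'M[K]_N.+1)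
   (v : 'rV[K]_N.+1) (p : {poly L}) (i0 : 'I_(\dim (fullv : {vspace L}))) :
  map_mx (in_alg L) v *m horner_mx (map_mx (in_alg L) A) p = 0 ->
  v *m horner_mx A (map_poly (coord (vbasis (fullv : {vspace L})) i0) p) = 0.
Proof.
rewrite (@horner_mx_sum _ _ _ _ _ (leqnn (size p))).
rewrite (@horner_mx_sum _ _ _ _ (size p)); last by rewrite size_poly.
rewrite !mulmx_sumr => h; apply/rowP => k.
have := congr1 (fun X : 'rV_N.+1 => coord (vbasis (fullv : {vspace L})) i0 (X 0 k)) h.
rewrite !summxE linear_sum (_ : (0 : 'rV[L]_N.+1) 0 k = 0) ?mxE // linear0 /= => e.
rewrite -[X in _ = X]e.
apply: eq_bigr => i _.
rewrite coef_map_id0 ?linear0 // -!scalemxAr -map_mxX' -map_mxM.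
set w := v *m A ^+ i.
rewrite !mxE; set s := (\sum_j _ * _)%R.
by rewrite (_ : GRing.GRing_in_alg__canonical__GRing_RMorphism _ s = s%:A) // mulr_algr linearZ /= mulrC.

Qed.



Lemma coord_nz (K : fieldType) (L : fieldExtType K) (l : L) :
  l != 0 -> exists i0, coord (vbasis (fullv : {vspace L})) i0 l != 0.
Proof.
move=> hl; apply/existsP; apply: contraR hl => /existsPn h.
rewrite (coord_vbasis (memvf l)) big1 // => i _.
by have := h i; rewrite negbK => /eqP ->; rewrite scale0r.
Qed.

Lemma closure_lem (L : fieldType) (N : nat) (A : 'M[L]_N.+1) (C : {vspace 'rV[L]_N.+1}) :
  (forall c, c \in C -> c *m A \in C) ->
  forall c p, c \in C -> c *m horner_mx A p \in C.
Proof.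
move=> hC c p hc.
have hX : forall i c, c \in C -> c *m A ^+ i \in C.
  elim=> [|i IH] d hd; first by rewrite expr0 mulmx1.
  by rewrite exprS -mulmxE mulmxA; apply: IH; apply: hC.
rewrite (@horner_mx_sum _ _ _ _ _ (leqnn (size p))) mulmx_sumr.
by apply: memv_suml => i _; rewrite -scalemxAr memvZ // hX.
Qed.

Lemma peel_pow (L : fieldType) (N : nat) (A : 'M[L]_N.+1) (c : 'rV[L]_N.+1) (r : {poly L}) k :
  c != 0 -> c *m horner_mx A (r ^+ k) = 0 ->
  exists p, (c *m horner_mx A p != 0) /\ (c *m horner_mx A p *m horner_mx A r = 0).
Proof.
move=> hc; elim: k => [|k IH].
  by rewrite expr0 rmorph1 mulmx1 => h; rewrite h eqxx in hc.
rewrite exprSr rmorphM /= -mulmxE mulmxA => h.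
case: (eqVneq (c *m horner_mx A (r ^+ k)) 0) => [h0|hn]; first exact: IH.
by exists (r ^+ k).
Qed.

Lemma peel_prod (L : fieldType) (N : nat) (A : 'M[L]_N.+1) (I : eqType) (g : I -> {poly L})
  (mu : I -> nat) (s : seq I) (c : 'rV[L]_N.+1) :
  c != 0 -> c *m horner_mx A (\prod_(i <- s) g i ^+ mu i) = 0 ->
  exists p, exists i, (c *m horner_mx A p != 0) /\ (c *m horner_mx A p *m horner_mx A (g i) = 0).
Proof.
elim: s c => [|i s IH] c hc.
  by rewrite big_nil rmorph1 mulmx1 => h; rewrite h eqxx in hc.
rewrite big_cons rmorphM /= -mulmxE mulmxA => h.
case: (eqVneq (c *m horner_mx A (g i ^+ mu i)) 0) => [h0|hn].
  by have [p [h1 h2]] := @peel_pow _ _ A c (g i) (mu i) hc h0; exists p, i.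
have [p [j [h1 h2]]] := IH _ hn h.
exists (g i ^+ mu i * p), j.
by rewrite rmorphM /= -mulmxE mulmxA.
Qed.

Theorem corollary4 (K : fieldType) (L : fieldExtType K) (n : nat)
    (M : 'M[K]_n.+1) (s : nat) (f : 'I_s -> {poly K}) (mu : 'I_s -> nat) :
  (n.+1 <= \dim {:L})%N ->
  cyclic_mx M ->
  (forall i, f i \is monic) ->
  (forall i, irreducible_poly (f i)) ->
  injective f ->
  (forall i, (1 <= mu i)%N) ->
  mxminpoly M = \prod_(i < s) f i ^+ mu i ->
  (forall C : {vspace 'rV[L]_n.+1},
      C != 0%VS -> mx_invariant_code M C -> M1_eq C 1) <->
  (forall i, irreducible_poly (map_poly (in_alg L) (f i))).
Proof.
move=> _ [v0 hcyc] hmon hirr _ hmu hF.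
set F := mxminpoly M in hF.
set AL := map_mx (in_alg L) M^T.
set u := map_mx (in_alg L) v0.
set FL := map_poly (in_alg L) F.
have hA0 : horner_mx M^T F = 0 by rewrite horner_mx_tr mx_root_minpoly trmx0.
have hAL0 : horner_mx AL FL = 0 by rewrite /AL /FL -map_horner_mx hA0 map_mx0.
have Fne0 : F != 0 by rewrite monic_neq0 // mxminpoly_monic.
have FLne0 : FL != 0 by rewrite map_poly_eq0.
have hsF : (size FL <= n.+2)%N.
  rewrite size_map_poly -(size_char_poly M).
  apply: dvdp_leq; last exact: mxminpoly_dvd_char.
  by rewrite monic_neq0 // char_poly_monic.
have hcycL : (\matrix_(i < n.+1) (u *m AL ^+ i)) \in unitmx.
  have -> : (\matrix_(i < n.+1) (u *m AL ^+ i)) =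
            map_mx (in_alg L) (\matrix_(i < n.+1) (v0 *m (M^T) ^+ i)).
    apply/row_matrixP => i; rewrite -map_row !rowK map_mxM map_mxX'.
    by [].
  by rewrite map_unitmx.
have cyc0 : forall p, u *m horner_mx AL p = 0 -> FL %| p.
  move=> p hp; apply/modp_eq0P.
  apply: (@cyc_inj _ _ AL u _ hcycL).
    by have := ltn_modp p FL; rewrite FLne0 => h; rewrite -ltnS (leq_trans h hsF).
  move: hp; rewrite {1}(divp_eq p FL) rmorphD rmorphM /= hAL0 mulr0 add0r.
  by [].
have fdF : forall i, f i %| F.
  move=> i; rewrite hF (bigD1 i) //= dvdp_mulr //.
  by apply: dvdp_exp; [exact: hmu | exact: dvdpp].
have gdF : forall i, map_poly (in_alg L) (f i) %| FL by move=> i; rewrite /FL dvdp_map.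
split.
- move=> H i; set g := map_poly (in_alg L) (f i).
  have fne0 : f i != 0 by rewrite monic_neq0.
  have gne0 : g != 0 by rewrite map_poly_eq0.
  split; first by rewrite size_map_poly; exact: (hirr i).1.
  move=> q hq1 hqg; case: (boolP (q %= g)) => // hne; exfalso.
  have qne0 : q != 0 by apply: contraNneq gne0 => q0; move: hqg; rewrite q0 dvd0p.
  have hq2 : (2 <= size q)%N.
    by move: hq1; rewrite -size_poly_eq0 in qne0; case: (size q) qne0 => [|[|k]].
  have qFL : q %| FL by apply: dvdp_trans (gdF i).
  set B := horner_mx AL q.
  pose C : {vspace 'rV[L]_n.+1} := lker (linfun (@mulmxr _ 1 _ _ B)).
  have memC : forall c, (c \in C) = (c *m B == 0) by move=> c; rewrite memv_ker lfunE.
  set w := u *m horner_mx AL (FL %/ q).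
  have wC : w \in C.
    by rewrite memC /w /B -mulmxA mulmxE -rmorphM /= divpK // hAL0 mulmx0.
  have wne0 : w != 0.
    apply/eqP => /(@cyc_inj _ _ AL u _ hcycL) h.
    have : (size (FL %/ q)%R <= n.+1)%N.
      rewrite size_divp // leq_subLR (leq_trans hsF) //.
      by case: (size q) hq2 => [|[|k]] //= _; rewrite addSn ltnS leq_addl.
    move/h => h0; move: (divpK qFL); rewrite h0 mul0r => /esym/eqP.
    by rewrite (negbTE FLne0).
  have C0 : C != 0%VS by apply/eqP => C0; move: wC; rewrite C0 memv0 (negbTE wne0).
  have Cinv : mx_invariant_code M C.
    move=> c; rewrite !memC -/AL -mulmxA.
    have -> : AL *m B = B *m AL by apply: comm_mx_horner.
    by rewrite mulmxA => /eqP ->; rewrite mul0mx.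
  have [[c /andP [cC cne0] rw1] _] := H C C0 Cinv.
  have [lam lne0 [v cE]] := @rw_one _ _ _ c rw1.
  have vB : map_mx (in_alg L) v *m B = 0.
    move: cC; rewrite memC cE -scalemxAl scaler_eq0 (negbTE lne0) /=.
    by move/eqP.
  have vne0 : v != 0.
    by apply: contraNneq cne0 => v0'; rewrite cE v0' map_mx0 scaler0.
  have lqne0 : lead_coef q != 0 by rewrite lead_coef_eq0.
  have [i0 hi0] := @coord_nz _ L _ lqne0.
  set r := map_poly (coord (vbasis (fullv : {vspace L})) i0) q.
  have vr : v *m horner_mx M^T r = 0 by apply: phi_lem.
  have sr : size r = size q by apply: size_map_poly_id0.
  have vf : v *m horner_mx M^T (f i) = 0.
    apply/eqP; rewrite -(map_mx_eq0 (in_alg L)) map_mxM map_horner_mx -/AL -/g.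
    have [qq ->] := dvdpP _ _ hqg.
    by rewrite mulrC rmorphM /= -mulmxE mulmxA vB mul0mx.
  have sqg : (size q < size g)%N.
    rewrite ltn_neqAle dvdp_leq // andbT.
    by rewrite dvdp_size_eqp.
  have cop : coprimep (f i) r.
    rewrite irreducible_poly_coprime //.
    apply/negP => /(dvdp_leq) h.
    have rne0 : r != 0 by rewrite -size_poly_eq0 sr; case: (size q) hq2.
    have := h rne0; rewrite sr -(size_map_poly (in_alg L)) -/g.
    by rewrite leqNgt sqg.
  have [[a b] /= hab] := Bezout_eq1_coprimepP _ _ cop.
  move/negP: vne0; apply; apply/eqP.
  have e1 : v *m horner_mx M^T 1 = v by rewrite rmorph1 mulmx1.
  rewrite -e1 -hab rmorphD /= mulmxDr.
  rewrite [a * _]mulrC [b * _]mulrC !rmorphM /= -!mulmxE !mulmxA vr vf !mul0mx.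
  by rewrite addr0.
- move=> Hirr C C0 Cinv; split; last by move=> c _ cne0; exact: rw_pos.
  have Cinv' : forall c, c \in C -> c *m AL \in C by exact: Cinv.
  set c := vpick C.
  have cC : c \in C by exact: memv_pick.
  have cne0 : c != 0 by rewrite vpick0.
  pose g i := map_poly (in_alg L) (f i).
  have FLE : FL = \prod_(i <- index_enum 'I_s) g i ^+ mu i.
    by rewrite /FL hF rmorph_prod; apply: eq_bigr => i _; rewrite rmorphXn.
  have hc0 : c *m horner_mx AL (\prod_(i <- index_enum 'I_s) g i ^+ mu i) = 0.
    by rewrite -FLE hAL0 mulmx0.
  have [p [i [wne0 wg]]] := @peel_prod _ _ AL _ g mu _ c cne0 hc0.
  set w := c *m horner_mx AL p in wne0 wg.
  have wC : w \in C by apply: closure_lem.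
  have hg := Hirr i.
  have gne0 : g i != 0 by rewrite map_poly_eq0 monic_neq0.
  set FL' := FL %/ g i.
  have FLe : FL' * g i = FL by exact: divpK (gdF i).
  have FL'ne0 : FL' != 0 by apply: contraNneq FLne0 => h; rewrite -FLe h mul0r.
  have [P wP] := @cyc_surj _ _ AL u w hcycL.
  have hPg : FL' %| P.
    rewrite -(dvdp_mul2r _ _ gne0) FLe; apply: cyc0.
    by rewrite rmorphM /= -mulmxE mulmxA -wP.
  have [a Pa] := dvdpP _ _ hPg.
  have nga : ~~ (g i %| a).
    apply/negP => /(dvdpP _ _) [b ab]; move/negP: wne0; apply; apply/eqP.
    by rewrite wP Pa ab -mulrA [_ * FL']mulrC FLe rmorphM /= -mulmxE mulmxA ?mulmx0 -?mulmxE hAL0 mulmx0.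
  have cop : coprimep (g i) a by rewrite irreducible_poly_coprime.
  have [[x y] /= hxy] := Bezout_eq1_coprimepP _ _ cop.
  set z' := u *m horner_mx AL FL'.
  have zC : z' \in C.
    have e : P * y = FL' - x * FL.
      rewrite Pa -FLe.
      have e2 : a * FL' * y = FL' * (x * g i + y * a) - x * (FL' * g i) by ring.
      by rewrite e2 hxy mulr1.
    have : w *m horner_mx AL y \in C by apply: closure_lem.
    rewrite wP -mulmxA mulmxE -rmorphM /= e rmorphB /= mulmxBr rmorphM /= hAL0 mulr0 mulmx0 subr0.
    by [].
  have zne0 : z' != 0.
    apply/eqP => /(@cyc_inj _ _ AL u _ hcycL) h.
    have : (size FL' <= n.+1)%N.
      rewrite size_divp // leq_subLR (leq_trans hsF) //.
      have := (hg).1; rewrite -/(g i).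
      by case: (size (g i)) => [|[|k]] //= _; rewrite addSn ltnS leq_addl.
    by move/h/eqP; rewrite (negbTE FL'ne0).
  have zE : z' = map_mx (in_alg L) (v0 *m horner_mx M^T (F %/ f i)).
    by rewrite map_mxM map_horner_mx map_divp.
  exists z'; first by rewrite zC zne0.
  rewrite zE rw_K //.
  by apply: contraNneq zne0 => h; rewrite zE h map_mx0.
Qed.
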